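(* Let $X$ be a square-free word of length $4$ and $Y$ a square-free word of length $6$. Then there exist a length-2 factor $a_1a_2$ of $X$ and a length-2 factor $b_1b_2$ of $Y$ (with $a_1,a_2,b_1,b_2$ letters) such that $a_1\notin\{b_1,b_2\}$ and $b_2\notin\{a_1,a_2\}$.
   Context: A word is square-free if it has no factor of the form $UU$ with $U$ nonempty. A factor is a contiguous subword. *)

(* Defs.v *)
From mathcomp Require Import all_boot.
Set Implicit Arguments. Unset Strict Implicit. Unset Printing Implicit Defensive.

Definition square_free (T : eqType) (w : seq T) : Prop :=
  forall U : seq T, U != [::] -> ~~ infix (U ++ U) w.

(* Main.v *)
Require Import Defs.
From mathcomp Require Import all_boot.
From Stdlib Require Import Classical.

Lemma inf_mid (T : eqType) (s a b w : seq T) : w = a ++ s ++ b -> infix s w.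
Proof. by move=> ->; apply/infixP; exists a, b. Qed.
Arguments inf_mid {T s a b w}.

Lemma L1 (T : Type) (a b c d : T) : a <> b ->
  (c = a \/ d = a \/ d = b) -> (c = b \/ d = b \/ d = a) -> d = a \/ d = b.
Proof. intros; intuition congruence. Qed.

Lemma L2 (T : Type) (a b y2 y3 y4 y5 : T) :
  (y2 = a \/ y2 = b) -> (y3 = a \/ y3 = b) -> (y4 = a \/ y4 = b) -> (y5 = a \/ y5 = b) ->
  y2 <> y3 -> y3 <> y4 -> y4 <> y5 -> y2 = y4 /\ y3 = y5.
Proof. intros; intuition congruence. Qed.

Lemma L3 (T : Type) (p q r s c d : T) : p <> q -> q <> r -> r <> p -> s <> q ->
  (c = p \/ d = p \/ d = q) -> (c = q \/ d = q \/ d = r) -> (c = r \/ d = r \/ d = s) ->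
  (d = p /\ c = q) \/ (d = q /\ c = r) \/ (d = r /\ c = p).
Proof. intros; intuition congruence. Qed.

Arguments L1 {T a b c d}.
Arguments L2 {T a b y2 y3 y4 y5}.
Arguments L3 {T p q r s c d}.

Theorem mainTheorem8 (T : eqType) (X Y : seq T) :
  size X = 4 -> size Y = 6 -> square_free X -> square_free Y ->
  exists a1 a2 b1 b2 : T,
    [/\ infix [:: a1; a2] X, infix [:: b1; b2] Y,
        a1 \notin [:: b1; b2] & b2 \notin [:: a1; a2]].
Proof.
move=> sX sY sfX sfY.
apply: NNPP => Hn.
have F : forall a b c d, infix [:: a; b] X -> infix [:: c; d] Y ->
    c = a \/ d = a \/ d = b.
  move=> a b c d h1 h2.
  case: (eqVneq c a) => [->|ca]; first by left.
  case: (eqVneq d a) => [->|da]; first by right; left.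
  case: (eqVneq d b) => [->|db]; first by right; right.
  exfalso; apply: Hn; exists a, b, c, d; split => //.
    by rewrite !inE negb_or ![a == _]eq_sym ca da.
  by rewrite !inE negb_or da db.
have sq : forall (U : seq T) (W : seq T), U != [::] -> (exists A B, W = A ++ (U ++ U) ++ B) ->
    infix (U ++ U) W.
  by move=> U W _ [A [B ->]]; apply/infixP; exists A, B.
clear Hn sq.
case: X sX sfX F => [|p [|q [|r [|s [|]]]]] // _ sfX.
case: Y sY sfY => [|y1 [|y2 [|y3 [|y4 [|y5 [|y6 [|]]]]]]] // _ sfY F.
have nsq : forall (W : seq T) (U : seq T) A B, square_free W -> U != [::] ->
    W = A ++ (U ++ U) ++ B -> False.
  move=> W U A B sf ne E; move: (sf U ne); rewrite (inf_mid E) //.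
have Xpq : p <> q by move=> E; subst; apply: (nsq _ [:: q] [::] [:: r; s] sfX).
have Xqr : q <> r by move=> E; subst; apply: (nsq _ [:: r] [:: p] [:: s] sfX).
have Xrs : r <> s by move=> E; subst; apply: (nsq _ [:: s] [:: p; q] [::] sfX).
have Xsq : ~ (p = r /\ q = s) by move=> [E1 E2]; subst; apply: (nsq _ [:: r; s] [::] [::] sfX).
have Y23 : y2 <> y3 by move=> E; subst; apply: (nsq _ [:: y3] [:: y1] [:: y4; y5; y6] sfY).
have Y34 : y3 <> y4 by move=> E; subst; apply: (nsq _ [:: y4] [:: y1; y2] [:: y5; y6] sfY).
have Y45 : y4 <> y5 by move=> E; subst; apply: (nsq _ [:: y5] [:: y1; y2; y3] [:: y6] sfY).
have Ysq : ~ (y2 = y4 /\ y3 = y5) by move=> [E1 E2]; subst; apply: (nsq _ [:: y4; y5] [:: y1] [:: y6] sfY).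
have Ysq3 : ~ (y1 = y4 /\ y2 = y5 /\ y3 = y6) by move=> [E1 [E2 E3]]; subst; apply: (nsq _ [:: y4; y5; y6] [::] [::] sfY).
have iX1 : infix [:: p; q] [:: p; q; r; s] by apply: (inf_mid (a:=[::]) (b:=[:: r; s])).
have iX2 : infix [:: q; r] [:: p; q; r; s] by apply: (inf_mid (a:=[:: p]) (b:=[:: s])).
have iX3 : infix [:: r; s] [:: p; q; r; s] by apply: (inf_mid (a:=[:: p; q]) (b:=[::])).
have iY1 : infix [:: y1; y2] [:: y1; y2; y3; y4; y5; y6] by apply: (inf_mid (a:=[::]) (b:=[:: y3; y4; y5; y6])).
have iY2 : infix [:: y2; y3] [:: y1; y2; y3; y4; y5; y6] by apply: (inf_mid (a:=[:: y1]) (b:=[:: y4; y5; y6])).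
have iY3 : infix [:: y3; y4] [:: y1; y2; y3; y4; y5; y6] by apply: (inf_mid (a:=[:: y1; y2]) (b:=[:: y5; y6])).
have iY4 : infix [:: y4; y5] [:: y1; y2; y3; y4; y5; y6] by apply: (inf_mid (a:=[:: y1; y2; y3]) (b:=[:: y6])).
have iY5 : infix [:: y5; y6] [:: y1; y2; y3; y4; y5; y6] by apply: (inf_mid (a:=[:: y1; y2; y3; y4]) (b:=[::])).
case: (eqVneq r p) => [Erp|Nrp].
  subst r.
  have B := fun (c d : T) (h : infix [:: c; d] [:: y1; y2; y3; y4; y5; y6]) => L1 Xpq (F _ _ _ _ iX1 h) (F _ _ _ _ iX2 h).
  exact: Ysq (L2 (B _ _ iY1) (B _ _ iY2) (B _ _ iY3) (B _ _ iY4) Y23 Y34 Y45).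
have Nrp' : r <> p by apply/eqP.
case: (eqVneq s q) => [Esq|Nsq].
  subst s.
  have B := fun (c d : T) (h : infix [:: c; d] [:: y1; y2; y3; y4; y5; y6]) => L1 Xqr (F _ _ _ _ iX2 h) (F _ _ _ _ iX3 h).
  exact: Ysq (L2 (B _ _ iY1) (B _ _ iY2) (B _ _ iY3) (B _ _ iY4) Y23 Y34 Y45).
have Nsq' : s <> q by apply/eqP.
have B := fun (c d : T) (h : infix [:: c; d] [:: y1; y2; y3; y4; y5; y6]) =>
  L3 Xpq Xqr Nrp' Nsq' (F _ _ _ _ iX1 h) (F _ _ _ _ iX2 h) (F _ _ _ _ iX3 h).
move: (B _ _ iY1) (B _ _ iY2) (B _ _ iY3) (B _ _ iY4) (B _ _ iY5).
move=> H1 H2 H3 H4 H5; apply: Ysq3.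
case: H1 => [[? ?]|[[? ?]|[? ?]]]; case: H2 => [[? ?]|[[? ?]|[? ?]]];
case: H3 => [[? ?]|[[? ?]|[? ?]]]; case: H4 => [[? ?]|[[? ?]|[? ?]]];
case: H5 => [[? ?]|[[? ?]|[? ?]]]; subst; (split; [|split]); congruence.
Qed.
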